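(* Let $1\le K<d$ be integers, $T_\lambda$ as below, $u_\lambda$ the minimal solution in $[1,\infty)$ of $T_\lambda(u)=u$ (which exists for $\lambda$ in a left neighbourhood of $1$), and $h_\lambda(x)=\frac{u_\lambda-T_\lambda(u_\lambda-x)}{x}$. There exist $\tilde\lambda<1$ and $b\in\mathbb N$ (independent of $\lambda$) such that for all $\lambda\in(\tilde\lambda,1)$ the function $h_\lambda$ is decreasing on $[u_\lambda-\lambda^b,u_\lambda]$.
   Context: $T_\lambda(u)=\frac{\lambda}{K}\sum_{j=0}^{K-1}(K-j)\binom{d}{j}u^{d-j}(1-u)^j$ for $u\in[0,\infty)$, $\lambda\in(0,1)$. *)

(* Defs.v *)
From Stdlib Require Import Reals.
Open Scope R_scope.

(* T_lambda(u) = lambda/K * sum_{j=0}^{K-1} (K-j) C(d,j) u^(d-j) (1-u)^j.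
   sum_f_R0 f (K-1) = f 0 + ... + f (K-1); K >= 1 is assumed in the theorem. *)
Definition T (K d : nat) (lam u : R) : R :=
  lam / INR K *
  sum_f_R0 (fun j => INR (K - j) * Binomial.C d j * u ^ (d - j) * (1 - u) ^ j) (K - 1).

Definition is_min_fixpoint (K d : nat) (lam u : R) : Prop :=
  1 <= u /\ T K d lam u = u /\ (forall v, 1 <= v < u -> T K d lam v <> v).

Definition h (K d : nat) (lam u x : R) : R :=
  (u - T K d lam (u - x)) / x.

(* Main.v *)
Require Import Defs.
From Stdlib Require Import Reals Lra Lia.
Open Scope R_scope.

Lemma dl_ext f g x l : (forall y, f y = g y) -> derivable_pt_lim f x l -> derivable_pt_lim g x l.
Proof. intros E H eps He. destruct (H eps He) as [del Hd]. exists del. intros h Hh Hh'.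
  rewrite <- !E. now apply Hd. Qed.
Lemma dl_eqv f x l l' : l = l' -> derivable_pt_lim f x l -> derivable_pt_lim f x l'.
Proof. intros ->; auto. Qed.
Lemma dl_mult f g x a b : derivable_pt_lim f x a -> derivable_pt_lim g x b ->
  derivable_pt_lim (fun y => f y * g y) x (a * g x + f x * b).
Proof. intros; exact (derivable_pt_lim_mult f g x a b H H0). Qed.
Lemma dl_plus f g x a b : derivable_pt_lim f x a -> derivable_pt_lim g x b ->
  derivable_pt_lim (fun y => f y + g y) x (a + b).
Proof. intros; exact (derivable_pt_lim_plus f g x a b H H0). Qed.
Lemma dl_const c x : derivable_pt_lim (fun _ => c) x 0.
Proof. exact (derivable_pt_lim_const c x). Qed.
Lemma dl_pow1m n x : derivable_pt_lim (fun y => (1 - y) ^ n) x (- (INR n * (1-x)^pred n)).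
Proof.
  assert (H1 : derivable_pt_lim (fun y => 1 - y) x (-1)).
  { apply (dl_eqv _ _ (0 - 1)); [ring|]. exact (derivable_pt_lim_minus (fct_cte 1) id x 0 1
      (derivable_pt_lim_const 1 x) (derivable_pt_lim_id x)). }
  pose proof (derivable_pt_lim_comp _ _ x _ _ H1 (derivable_pt_lim_pow (1 - x) n)).
  eapply dl_eqv; [|exact H]. ring.
Qed.
Lemma dl_scal c f x l : derivable_pt_lim f x l -> derivable_pt_lim (fun y => c * f y) x (c * l).
Proof. intros; exact (derivable_pt_lim_scal f c x l H). Qed.
Lemma dl_sum (f : nat -> R -> R) (f' : nat -> R) N x :
  (forall i, (i <= N)%nat -> derivable_pt_lim (f i) x (f' i)) ->
  derivable_pt_lim (fun y => sum_f_R0 (fun i => f i y) N) x (sum_f_R0 f' N).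
Proof.
  induction N; intros H; simpl.
  - apply H; lia.
  - apply dl_plus; [apply IHN; intros; apply H; lia| apply H; lia].
Qed.

Definition bp (n m : nat) (s : R) := Binomial.C n m * s ^ (n - m) * (1 - s) ^ m.
Definition G (n k : nat) (s : R) := sum_f_R0 (fun m => bp n m s) k.

Lemma C_id1 m k : (k <= m)%nat -> Binomial.C (S m) (S k) * INR (S k) = INR (S m) * Binomial.C m k.
Proof.
  intros Hk. unfold Binomial.C. replace (S m - S k)%nat with (m - k)%nat by lia.
  rewrite !fact_simpl, !mult_INR.
  pose proof (INR_fact_lt_0 k). pose proof (INR_fact_lt_0 (m-k)).
  pose proof (INR_fact_lt_0 m). assert (0 < INR (S k)) by (apply lt_0_INR; lia).
  field. repeat split; try lra. all: try (apply not_0_INR; lia). all: apply INR_fact_neq_0.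
Qed.

Lemma C_id2 m k : (S k <= m)%nat -> Binomial.C (S m) (S k) * INR (m - k) = INR (S m) * Binomial.C m (S k).
Proof.
  intros Hk. unfold Binomial.C. replace (S m - S k)%nat with (m - k)%nat by lia.
  replace (m - k)%nat with (S (m - S k))%nat by lia.
  rewrite !fact_simpl, !mult_INR.
  pose proof (INR_fact_lt_0 (S k)). pose proof (INR_fact_lt_0 (m-S k)).
  pose proof (INR_fact_lt_0 m). assert (0 < INR (S (m - S k))) by (apply lt_0_INR; lia).
  field. repeat split; try lra. all: try (apply not_0_INR; lia). all: apply INR_fact_neq_0.
Qed.

Lemma C_n0 n : Binomial.C n 0 = 1.
Proof. unfold Binomial.C. rewrite Nat.sub_0_r. simpl (Factorial.fact 0). simpl INR.
  pose proof (INR_fact_lt_0 n). field. lra. Qed.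

Lemma deriv_G m k s : (k <= m)%nat ->
  derivable_pt_lim (G (S m) k) s (INR (S m) * bp m k s).
Proof.
  induction k; intros Hk.
  - apply (dl_ext (fun y => y ^ S m)).
    { intros y. unfold G, bp; simpl sum_f_R0. rewrite C_n0. replace (S m - 0)%nat with (S m) by lia. simpl; ring. }
    eapply dl_eqv; [|apply derivable_pt_lim_pow]. unfold bp. rewrite Nat.sub_0_r, C_n0. simpl; ring.
  - unfold G. simpl sum_f_R0.
    apply (dl_eqv _ _ (INR (S m) * bp m k s + Binomial.C (S m) (S k) *
        (INR (m - k) * s ^ (pred (m - k)) * (1 - s) ^ (S k) + s ^ (m - k) * (- (INR (S k) * (1-s)^pred (S k)))))).
    2:{ apply dl_plus. apply IHk; lia. unfold bp.
        replace (S m - S k)%nat with (m - k)%nat by lia.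
        eapply dl_ext. { intros y. instantiate (1 := fun y => Binomial.C (S m) (S k) * (y ^ (m-k) * (1 - y) ^ S k)). simpl; ring. }
        apply dl_scal. apply dl_mult. apply derivable_pt_lim_pow. apply dl_pow1m. }
    unfold bp. replace (m - k)%nat with (S (m - S k))%nat at 1 3 by lia. simpl pred.
    assert (E1 := C_id1 m k ltac:(lia)). assert (E2 := C_id2 m k Hk).
    replace (S (m - S k)) with (m - k)%nat by lia.
    replace (s ^ (m - k)) with (s * s ^ (m - S k)) by (replace (m-k)%nat with (S (m - S k)) by lia; reflexivity).
    simpl pow.
    transitivity (INR (S m) * Binomial.C m k * (s * s ^ (m - S k)) * (1 - s) ^ k +
       (Binomial.C (S m) (S k) * INR (m - k)) * s ^ (m - S k) * ((1 - s) * (1 - s) ^ k) -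
       (Binomial.C (S m) (S k) * INR (S k)) * (s * s ^ (m - S k)) * (1-s)^k).
    + ring.
    + rewrite E1, E2. ring.
Qed.

Lemma sum_swap d k u : sum_f_R0 (fun j => INR (S k - j) * bp d j u) k = sum_f_R0 (fun m => G d m u) k.
Proof.
  induction k.
  - simpl. unfold G. simpl. ring.
  - change (sum_f_R0 (fun m => G d m u) (S k)) with (sum_f_R0 (fun m => G d m u) k + G d (S k) u).
    rewrite <- IHk. unfold G at 1.
    rewrite (sum_eq (fun j => INR (S (S k) - j) * bp d j u) (fun j => INR (S k - j) * bp d j u + bp d j u)).
    + rewrite plus_sum. change (sum_f_R0 (fun j => INR (S k - j) * bp d j u) (S k)) with (sum_f_R0 (fun j => INR (S k - j) * bp d j u) k + INR (S k - S k) * bp d (S k) u). rewrite Nat.sub_diag. simpl INR. ring.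
    + intros i Hi. replace (S (S k) - i)%nat with (S (S k - i)) by lia. rewrite S_INR. ring.
Qed.

Lemma T_eq K d lam u : (1 <= K)%nat -> T K d lam u = lam / INR K * sum_f_R0 (fun m => G d m u) (K - 1).
Proof.
  intros HK. unfold T. destruct K as [|k]; [lia|]. replace (S k - 1)%nat with k by lia.
  rewrite <- sum_swap. f_equal. apply sum_eq. intros i _. unfold bp. ring.
Qed.

Lemma G_one n k : G n k 1 = 1.
Proof.
  induction k.
  - unfold G, bp. simpl. rewrite C_n0, pow1. ring.
  - unfold G in *. simpl. rewrite IHk. unfold bp. rewrite Rminus_diag. simpl. ring.
Qed.

Lemma T_one K d lam : (1 <= K)%nat -> T K d lam 1 = lam.
Proof.
  intros HK. rewrite T_eq by lia. rewrite (sum_eq _ (fun _ => 1)) by (intros; apply G_one).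
  rewrite sum_cte. replace (S (K - 1)) with K by lia. assert (0 < INR K) by (apply lt_0_INR; lia).
  field. lra.
Qed.

Lemma deriv_T K n lam u : (1 <= K)%nat -> (K - 1 <= n)%nat ->
  derivable_pt_lim (T K (S n) lam) u (lam / INR K * (INR (S n) * G n (K - 1) u)).
Proof.
  intros HK Hn. apply (dl_ext (fun y => lam / INR K * sum_f_R0 (fun m => G (S n) m y) (K - 1))).
  { intros; symmetry; apply T_eq; auto. }
  apply dl_scal. eapply dl_eqv; [|apply (dl_sum (fun m y => G (S n) m y) (fun m => INR (S n) * bp n m u))].
  - unfold G. rewrite scal_sum. apply sum_eq. intros; ring.
  - intros i Hi. apply deriv_G. lia.
Qed.

Section HF.
Variables m k : nat.
Hypothesis Hkm : (k <= m)%nat.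
Definition Cc := INR (S m) * Binomial.C m k.
Lemma Cc_pos : 0 < Cc.
Proof. unfold Cc, Binomial.C. pose proof (INR_fact_lt_0 m). pose proof (INR_fact_lt_0 k).
  pose proof (INR_fact_lt_0 (m-k)). assert (0 < INR (S m)) by (apply lt_0_INR; lia).
  apply Rmult_lt_0_compat; auto. unfold Rdiv. apply Rmult_lt_0_compat; auto.
  apply Rinv_0_lt_compat, Rmult_lt_0_compat; auto. Qed.

Lemma Hder s : derivable_pt_lim (G (S m) k) s (Cc * (s ^ (m - k) * (1 - s) ^ k)).
Proof. eapply dl_eqv; [|apply deriv_G; auto]. unfold Cc, bp. ring. Qed.

Lemma H_incr x y : 0 <= x -> x < y -> y <= 1 -> G (S m) k x < G (S m) k y.
Proof.
  intros H0 H1 H2. destruct (MVT_cor2 (G (S m) k) (fun s => Cc * (s ^ (m - k) * (1 - s) ^ k)) x y H1)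
    as [c [Ec Hc]]. { intros; apply Hder. }
  assert (0 < Cc * (c ^ (m - k) * (1 - c) ^ k) * (y - x)).
  { pose proof Cc_pos. apply Rmult_lt_0_compat; [apply Rmult_lt_0_compat; [exact H | apply Rmult_lt_0_compat; apply pow_lt; lra] | lra]. }
  lra.
Qed.

Lemma H_le1 x : 0 <= x <= 1 -> G (S m) k x <= 1.
Proof. intros [H0 H1]. destruct (Req_dec x 1) as [->|Hn]. rewrite G_one; lra.
  pose proof (H_incr x 1 H0 ltac:(lra) ltac:(lra)). rewrite G_one in H. lra. Qed.

Lemma H_gap d : 0 < d <= 1/2 ->
  G (S m) k (1 - d) <= 1 - Cc * ((1/2)^(m-k) * (d/2)^k * (d/2)).
Proof.
  intros Hd. destruct (MVT_cor2 (G (S m) k) (fun s => Cc * (s ^ (m - k) * (1 - s) ^ k)) (1-d) (1 - d/2))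
    as [c [Ec Hc]]; [lra| intros; apply Hder|].
  assert (G (S m) k (1 - d/2) <= 1) by (apply H_le1; lra).
  assert ((1/2)^(m-k) <= c^(m-k)) by (apply pow_incr; lra).
  assert ((d/2)^k <= (1-c)^k) by (apply pow_incr; lra).
  assert (0 <= (1/2)^(m-k)) by (apply pow_le; lra).
  assert (0 <= (d/2)^k) by (apply pow_le; lra).
  assert ((1/2)^(m-k) * (d/2)^k <= c^(m-k) * (1-c)^k) by (apply Rmult_le_compat; auto).
  pose proof Cc_pos.
  assert (Cc * ((1/2)^(m-k) * (d/2)^k) * (d/2) <= Cc * (c^(m-k) * (1-c)^k) * (1 - d/2 - (1-d))).
  { replace (1 - d/2 - (1-d)) with (d/2) by field. apply Rmult_le_compat_r; [lra|].
    apply Rmult_le_compat_l; lra. }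
  lra.
Qed.

Lemma H_low e t : 0 <= e <= 1 -> 1 <= t <= 1 + e ->
  1 - Cc * 2^(m-k) * e^k * e <= G (S m) k t.
Proof.
  intros He Ht. destruct (Req_dec t 1) as [->|Hne]. { rewrite G_one.
    pose proof Cc_pos. assert (0 <= 2^(m-k)) by (apply pow_le; lra).
    assert (0 <= e^k) by (apply pow_le; lra).
    assert (0 <= Cc * 2^(m-k) * e^k * e). { apply Rmult_le_pos; [|lra]. apply Rmult_le_pos; [|lra]. apply Rmult_le_pos; lra. } lra. }
  destruct (MVT_cor2 (G (S m) k) (fun s => Cc * (s ^ (m - k) * (1 - s) ^ k)) 1 t)
    as [c [Ec Hc]]; [lra| intros; apply Hder|].
  rewrite G_one in Ec.
  assert (A1 : Rabs (c ^ (m-k)) <= 2^(m-k)).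
  { rewrite <- RPow_abs. apply pow_incr. split; [apply Rabs_pos|]. rewrite Rabs_right; lra. }
  assert (A2 : Rabs ((1-c) ^ k) <= e^k).
  { rewrite <- RPow_abs. apply pow_incr. split; [apply Rabs_pos|]. rewrite Rabs_left1; lra. }
  assert (A3 : Rabs (c ^ (m-k) * (1-c)^k) <= 2^(m-k) * e^k).
  { rewrite Rabs_mult. apply Rmult_le_compat; auto; apply Rabs_pos. }
  pose proof Cc_pos.
  assert (A4 : Rabs (Cc * (c ^ (m-k) * (1-c)^k) * (t - 1)) <= Cc * (2^(m-k) * e^k) * e).
  { rewrite (Rabs_mult (Cc * _)), (Rabs_mult Cc). rewrite (Rabs_right Cc) by lra. rewrite (Rabs_right (t-1)) by lra.
    apply Rmult_le_compat; try lra. apply Rmult_le_pos; [lra|apply Rabs_pos].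
    apply Rmult_le_compat_l; lra. }
  assert (A5 : - (Cc * (c ^ (m-k) * (1-c)^k) * (t - 1)) <= Rabs (Cc * (c ^ (m-k) * (1-c)^k) * (t - 1))).
  { rewrite <- Rabs_Ropp. apply Rle_abs. }
  lra.
Qed.
End HF.

Lemma bernoulli l n : 0 <= l <= 1 -> 1 - INR n * (1 - l) <= l ^ n.
Proof.
  intros Hl. induction n. simpl; lra.
  rewrite S_INR. simpl pow.
  assert (l * l^n >= l * (1 - INR n * (1 - l))) by (apply Rle_ge, Rmult_le_compat_l; lra).
  assert (0 <= INR n) by apply pos_INR.
  assert (0 <= INR n * (1 - l) * (1 - l)) by (apply Rmult_le_pos; [apply Rmult_le_pos|]; lra).
  nra.
Qed.

Lemma pow_gap l n : 0 <= l <= 1 -> INR n * (1 - l) * l ^ n <= 1 - l ^ n.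
Proof.
  intros Hl. induction n. simpl; lra.
  rewrite S_INR. simpl pow.
  assert (0 <= l ^ n) by (apply pow_le; lra).
  assert (l ^ n <= 1) by (rewrite <- (pow1 n); apply pow_incr; lra).
  assert (0 <= INR n) by apply pos_INR.
  assert (INR n * (1 - l) * (l * l ^ n) <= INR n * (1 - l) * l ^ n).
  { rewrite <- (Rmult_1_l (l ^ n)) at 2. apply Rmult_le_compat_l. apply Rmult_le_pos; lra.
    apply Rmult_le_compat_r; lra. }
  assert (l * (1-l) * l^n <= (1-l) * l^n) by (apply Rmult_le_compat_r; [|]; nra).
  nra.
Qed.

Lemma ineq1 K' D A x0 Hv lam : 1 <= K' -> K' + 1 <= D -> 0 <= A -> 0 < x0 ->
  x0 <= 1 / (16 * (A + 1) * K'^2) -> lam = 1 - x0 -> Hv >= 1 - A * (4 * K' * x0) ->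
  lam * (D * Hv) >= K' + 3/8.
Proof.
  intros HK HD HA Hx Hx0 Hl HHv.
  set (z := (A + 1) * K' * x0).
  assert (Hz : z <= 1 / (16 * K')).
  { unfold z. apply (Rmult_le_reg_r (16 * (A+1) * K'^2 / ((A+1) * K'))).
    - apply Rdiv_lt_0_compat; nra.
    - replace (1 / (16 * K') * (16 * (A + 1) * K' ^ 2 / ((A + 1) * K'))) with 1 by (field; lra).
      replace ((A + 1) * K' * x0 * (16 * (A + 1) * K' ^ 2 / ((A + 1) * K'))) with (x0 * (16 * (A + 1) * K' ^ 2)) by (field; lra).
      apply (Rmult_le_compat_r (16 * (A + 1) * K' ^ 2)) in Hx0; [|nra].
      replace (1 / (16 * (A + 1) * K' ^ 2) * (16 * (A + 1) * K' ^ 2)) with 1 in Hx0 by (field; nra). lra. }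
  assert (Hz2 : z * K' <= 1/16).
  { apply (Rmult_le_compat_r K') in Hz; [|lra]. replace (1 / (16 * K') * K') with (1/16) in Hz by (field; lra). lra. }
  assert (HAK : 1 <= (A+1)*K') by nra.
  assert (x0 <= z) by (unfold z; nra).
  assert (A * K' * x0 <= z) by (unfold z; nra).
  assert (Hv3 : Hv >= 1 - 4 * z) by lra.
  assert (Hzp : 0 < z) by (unfold z; nra).
  assert (Hz1 : z <= 1/16) by nra.
  assert (Hx1 : x0 <= 1/16) by lra.
  assert (H1 : lam * Hv >= 1 - 5 * z).
  { subst lam. assert ((1 - x0) * (Hv - (1 - 4*z)) >= 0) by (apply Rle_ge, Rmult_le_pos; lra).
    assert (x0 * (4 * z) >= 0) by nra. nra. }
  assert (H2 : 0 <= 1 - 5 * z) by nra.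
  assert (H3 : D * (lam * Hv) >= (K' + 1) * (1 - 5 * z)) by nra.
  assert (H4 : (K' + 1) * (1 - 5 * z) >= K' + 3/8) by nra.
  nra.
Qed.

Lemma ineq2 K' A x0 : 1 <= K' -> 0 <= A -> 0 < x0 -> x0 <= 1 / (16 * (A + 1) * K'^2) ->
  4 * K' * x0 <= 1/4.
Proof.
  intros HK HA Hx Hx0.
  apply (Rmult_le_compat_r (16 * (A + 1) * K' ^ 2)) in Hx0; [|nra].
  replace (1 / (16 * (A + 1) * K' ^ 2) * (16 * (A + 1) * K' ^ 2)) with 1 in Hx0 by (field; nra).
  assert (16 * K' <= 16 * (A + 1) * K' ^ 2) by nra.
  assert (x0 * (16 * K') <= 1) by nra. nra.
Qed.

Lemma ineq3 B x0 : 0 < B -> 0 < x0 -> x0 <= 1 / (2 * B) -> B * x0 <= 1/2.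
Proof.
  intros HB Hx Hx0. apply (Rmult_le_compat_l B) in Hx0; [|lra].
  replace (B * (1 / (2 * B))) with (1/2) in Hx0 by (field; lra). lra.
Qed.

Lemma ineq4 P Q eta dd k : 1 <= P -> Q * P = 1 -> 0 <= eta -> P * P * eta <= dd ->
  P * eta ^ k * eta <= Q * (dd ^ k * dd).
Proof.
  intros HP HQ He Hd.
  assert (HQ0 : 0 < Q) by nra.
  assert (A1 : (P * P * eta) ^ k <= dd ^ k) by (apply pow_incr; split; nra).
  rewrite Rpow_mult_distr in A1.
  assert (A2 : 1 <= (P * P) ^ k) by (apply pow_R1_Rle; nra).
  assert (A3 : 0 <= eta ^ k) by (apply pow_le; lra).
  assert (A4 : eta ^ k <= dd ^ k) by nra.
  assert (A5 : eta ^ k * (P * P * eta) <= dd ^ k * dd) by (apply Rmult_le_compat; nra).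
  assert (A6 : Q * (eta ^ k * (P * P * eta)) <= Q * (dd ^ k * dd)) by (apply Rmult_le_compat_l; lra).
  replace (Q * (eta ^ k * (P * P * eta))) with ((Q * P) * P * eta ^ k * eta) in A6 by ring.
  rewrite HQ in A6. lra.
Qed.

Lemma div_lt A B x y : 0 < x -> 0 < y -> A * x < B * y -> A / y < B / x.
Proof.
  intros Hx Hy H. apply (Rmult_lt_reg_r (x * y)); [nra|].
  replace (A / y * (x * y)) with (A * x) by (field; lra).
  replace (B / x * (x * y)) with (B * y) by (field; lra). exact H.
Qed.

Theorem lemma3p6 (K d : nat) (HK1 : (1 <= K)%nat) (HKd : (K < d)%nat) :
  exists lt : R, lt < 1 /\
  exists b : nat,
    forall lam : R, 0 < lam -> lt < lam < 1 ->
      (exists u, is_min_fixpoint K d lam u) /\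
      (forall u, is_min_fixpoint K d lam u ->
         forall x y, u - lam ^ b <= x -> x < y -> y <= u ->
           h K d lam u y < h K d lam u x).
Proof.
  destruct K as [|k]; [lia|]. destruct d as [|d1]; [lia|]. destruct d1 as [|m]; [lia|].
  assert (Hkm : (k <= m)%nat) by lia.
  set (K' := INR (S k)). set (D := INR (S (S m))).
  assert (HK' : 1 <= K') by (unfold K'; rewrite S_INR; pose proof (pos_INR k); lra).
  assert (HD : K' + 1 <= D) by (unfold K', D; rewrite <- S_INR; apply le_INR; lia).
  set (P := 2 ^ (m - k)).
  assert (HP : 1 <= P) by (apply pow_R1_Rle; lra).
  pose proof (Cc_pos m k Hkm) as HCc.
  set (A := Cc m k * P).
  assert (HA : 0 <= A) by (unfold A; nra).
  set (b := (S k * 4 ^ (m - k) * 16)%nat).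
  assert (Hb : INR b = K' * (P * P) * 16).
  { unfold b, K', P. rewrite !mult_INR, pow_INR. rewrite <- Rpow_mult_distr.
    replace (INR 4) with (2 * 2) by (simpl; ring). replace (INR 16) with 16 by (simpl; ring). ring. }
  assert (Hbpos : 0 < INR b) by (rewrite Hb; nra).
  set (e0 := Rmin (1 / (16 * (A + 1) * K' ^ 2)) (1 / (2 * INR b))).
  assert (He0 : 0 < e0).
  { unfold e0. apply Rmin_glb_lt; apply Rdiv_lt_0_compat; try lra; nra. }
  exists (1 - e0). split; [lra|]. exists b.
  intros lam Hlam0 [Hlt Hl1].
  set (x0 := 1 - lam).
  assert (Hx0 : 0 < x0) by (unfold x0; lra).
  assert (Hx1 : x0 <= 1 / (16 * (A + 1) * K' ^ 2)) by (pose proof (Rmin_l (1 / (16 * (A + 1) * K' ^ 2)) (1 / (2 * INR b))); unfold x0; fold e0 in H; lra).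
  assert (Hx2 : x0 <= 1 / (2 * INR b)) by (pose proof (Rmin_r (1 / (16 * (A + 1) * K' ^ 2)) (1 / (2 * INR b))); unfold x0; fold e0 in H; lra).
  set (eta := 4 * K' * x0).
  assert (Heta : 0 < eta <= 1/4) by (unfold eta; split; [nra| apply (ineq2 K' A x0); auto]).
  assert (Hlb : 1/2 <= lam ^ b).
  { pose proof (bernoulli lam b ltac:(lra)). pose proof (ineq3 (INR b) x0 Hbpos Hx0 Hx2). unfold x0 in *. lra. }
  assert (Hlb1 : lam ^ b < 1).
  { assert (Hb0 : (0 < b)%nat) by (apply INR_lt; simpl; lra).
    replace b with (S (b - 1)) by lia. simpl pow.
    assert (lam ^ (b - 1) <= 1) by (rewrite <- (pow1 (b - 1)); apply pow_incr; lra).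
    assert (0 <= lam ^ (b - 1)) by (apply pow_le; lra). nra. }
  set (d0 := 1 - lam ^ b).
  assert (Hd0 : INR b * x0 / 2 <= d0).
  { pose proof (pow_gap lam b ltac:(lra)). unfold d0, x0 in *.
    assert (INR b * (1 - lam) * (1/2) <= INR b * (1 - lam) * lam ^ b) by (apply Rmult_le_compat_l; nra). lra. }
  set (c0 := lam / K' * D).
  assert (Hc0 : 0 < c0) by (unfold c0; apply Rmult_lt_0_compat; [apply Rdiv_lt_0_compat|]; lra).
  assert (TD : forall u, derivable_pt_lim (T (S k) (S (S m)) lam) u (c0 * G (S m) k u)).
  { intros u. eapply dl_eqv; [|apply (deriv_T (S k) (S m) lam u); lia].
    replace (S k - 1)%nat with k by lia. unfold c0, K', D. ring. }
  assert (HL : forall t, 1 <= t <= 1 + eta -> G (S m) k t >= 1 - A * eta).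
  { intros t Ht. pose proof (H_low m k Hkm eta t ltac:(lra) Ht).
    assert (eta ^ k <= 1) by (rewrite <- (pow1 k); apply pow_incr; lra).
    assert (0 <= eta ^ k) by (apply pow_le; lra).
    fold P in H. fold A in H.
    assert (eta ^ k * eta <= eta) by nra.
    assert (A * (eta ^ k * eta) <= A * eta) by (apply Rmult_le_compat_l; lra).
    replace (A * eta ^ k * eta) with (A * (eta ^ k * eta)) in H by ring. lra. }
  assert (GD : forall t, 1 <= t <= 1 + eta -> c0 * G (S m) k t - 1 >= 3 / (8 * K')).
  { intros t Ht. pose proof (ineq1 K' D A x0 (G (S m) k t) lam HK' HD HA Hx0 Hx1 ltac:(unfold x0; ring) (HL t Ht)).
    unfold c0. apply Rle_ge. apply (Rmult_le_reg_r K'); [lra|].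
    replace ((lam / K' * D * G (S m) k t - 1) * K') with (lam * (D * G (S m) k t) - K') by (field; lra).
    replace (3 / (8 * K') * K') with (3/8) by (field; lra). lra. }
  set (g := fun t => T (S k) (S (S m)) lam t - t).
  assert (gD : forall t, derivable_pt_lim g t (c0 * G (S m) k t - 1)).
  { intros t. unfold g. exact (derivable_pt_lim_minus _ id t _ _ (TD t) (derivable_pt_lim_id t)). }
  assert (g1 : g 1 = - x0) by (unfold g, x0; rewrite T_one by lia; ring).
  assert (gincr : forall a c, 1 <= a -> a < c -> c <= 1 + eta -> g a < g c).
  { intros a c Ha Hac Hc. destruct (MVT_cor2 g (fun t => c0 * G (S m) k t - 1) a c Hac) as [th [Eth Hth]].
    { intros; apply gD. }
    pose proof (GD th ltac:(lra)). assert (0 < 3 / (8 * K')) by (apply Rdiv_lt_0_compat; lra).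
    nra. }
  assert (gw : 0 < g (1 + eta)).
  { destruct (MVT_cor2 g (fun t => c0 * G (S m) k t - 1) 1 (1 + eta) ltac:(lra)) as [th [Eth Hth]].
    { intros; apply gD. }
    pose proof (GD th ltac:(lra)).
    assert (3 / (8 * K') * eta = 3/2 * x0) by (unfold eta; field; lra). nra. }
  assert (gcont : continuity g).
  { intros t. apply derivable_continuous_pt. exact (exist _ _ (gD t)). }
  destruct (IVT g 1 (1 + eta) gcont ltac:(lra) ltac:(lra) gw) as [v [Hv Hgv]].
  assert (Hvmin : is_min_fixpoint (S k) (S (S m)) lam v).
  { unfold is_min_fixpoint. split; [lra|]. split; [unfold g in Hgv; lra|].
    intros v' Hv' E. assert (g v' = 0) by (unfold g; lra). pose proof (gincr v' v ltac:(lra) ltac:(lra) ltac:(lra)). lra. }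
  split; [exists v; exact Hvmin|].
  intros u [Hu1 [Hu2 Hu3]] x y Hx Hxy Hy.
  assert (Hueta : u <= 1 + eta).
  { destruct (Rle_dec u (1 + eta)) as [|Hn]; auto. exfalso. destruct Hvmin as [_ [Hv2 _]].
    apply (Hu3 v); [lra|exact Hv2]. }
  set (Tf := T (S k) (S (S m)) lam) in *.
  set (s1 := u - y). set (s2 := u - x).
  assert (Hs1 : 0 <= s1) by (unfold s1; lra).
  assert (Hs12 : s1 < s2) by (unfold s1, s2; lra).
  assert (Hs2 : s2 <= lam ^ b) by (unfold s2; lra).
  destruct (MVT_cor2 Tf (fun t => c0 * G (S m) k t) s1 s2 Hs12) as [xi [E1 Hxi]]. { intros; apply TD. }
  destruct (MVT_cor2 Tf (fun t => c0 * G (S m) k t) s2 u ltac:(lra)) as [ze [E2 Hze]]. { intros; apply TD. }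
  assert (HG : G (S m) k xi < G (S m) k ze).
  { destruct (Rle_dec ze 1) as [Hz|Hz].
    - apply (H_incr m k Hkm); lra.
    - pose proof (H_low m k Hkm eta ze ltac:(lra) ltac:(lra)) as L1. fold P in L1.
      assert (Hd0' : 0 < d0 <= 1/2) by (unfold d0; lra).
      pose proof (H_gap m k Hkm d0 Hd0') as L2.
      assert (L3 : G (S m) k xi < G (S m) k (1 - d0)) by (apply (H_incr m k Hkm); unfold d0 in *; lra).
      set (Q := (1/2) ^ (m - k)) in L2.
      assert (HQ : Q * P = 1) by (unfold Q, P; rewrite <- Rpow_mult_distr; replace (1/2*2) with 1 by field; apply pow1).
      assert (Hdd : P * P * eta <= d0 / 2) by (rewrite Hb in Hd0; unfold eta; lra).
      pose proof (ineq4 P Q eta (d0/2) k HP HQ ltac:(lra) Hdd) as L4.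
      assert (L5 : Cc m k * (P * eta ^ k * eta) <= Cc m k * (Q * ((d0/2) ^ k * (d0/2)))) by (apply Rmult_le_compat_l; lra).
      replace (Cc m k * (P * eta ^ k * eta)) with (Cc m k * P * eta ^ k * eta) in L5 by ring.
      replace (Cc m k * (Q * ((d0/2) ^ k * (d0/2)))) with (Cc m k * (Q * (d0 / 2) ^ k * (d0 / 2))) in L5 by ring.
      lra. }
  assert (Hpq : c0 * G (S m) k xi < c0 * G (S m) k ze) by (apply Rmult_lt_compat_l; lra).
  set (p := c0 * G (S m) k xi) in *. set (q := c0 * G (S m) k ze) in *.
  unfold h. fold s1 s2.
  assert (Hxp : 0 < x) by lra.
  apply div_lt; [lra|lra|].
  assert (R1 : u - Tf s2 = q * x) by (unfold s2 in *; lra).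
  assert (R2 : u - Tf s1 = q * x + p * (y - x)) by (unfold s1, s2 in *; lra).
  fold Tf. rewrite R1, R2.
  assert (0 < (q - p) * (y - x) * x) by (apply Rmult_lt_0_compat; [apply Rmult_lt_0_compat|]; lra).
  nra.
Qed.
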